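(* Let $\mathfrak{g}$ be a finite-dimensional complex Lie algebra, let $I$ be an ideal of $\mathfrak{g}$ such that $\mathfrak{g}/I$ is abelian, and let $\mathfrak{z}=Z(I)$ be the center of $I$. Then every $1$-cocycle $f\in Z^1(\mathfrak{g}/I,\mathfrak{z})$ defines an associative nil-inner CPA-structure on $\mathfrak{g}$ by $x\cdot y=[f(\overline{x}),y]$ for all $x,y\in\mathfrak{g}$, where $\overline{x}$ denotes the image of $x$ in $\mathfrak{g}/I$.
   Context: $\mathfrak{z}$ is an ideal of $\mathfrak{g}$ and $\mathfrak{g}/I$ acts on $\mathfrak{z}$ by $\overline{x}\circ z=[x,z]$. $Z^1(\mathfrak{g}/I,\mathfrak{z})$ is the space of linear maps $f:\mathfrak{g}/I\to\mathfrak{z}$ with $f([\overline{x},\overline{y}])=\overline{x}\circ f(\overline{y})-\overline{y}\circ f(\overline{x})$. A CPA-structure on $\mathfrak{g}$ is a bilinear product $x\cdot y$ satisfying, for all $x,y,z$: $x\cdot y=y\cdot x$; $[x,y]\cdot z=x\cdot(y\cdot z)-y\cdot(x\cdot z)$; $x\cdot[y,z]=[x\cdot y,z]+[y,x\cdot z]$. It is nil-inner if $x\cdot y=[\phi(x),y]$ for some nilpotent Lie algebra homomorphism $\phi:\mathfrak{g}\to\mathfrak{g}$; associative means $(x\cdot y)\cdot z=x\cdot(y\cdot z)$. *)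

(* Defs.v *)
From HB Require Import structures.
From mathcomp Require Import all_boot all_order all_algebra.
From mathcomp Require Import reals complex.
Set Implicit Arguments. Unset Strict Implicit. Unset Printing Implicit Defensive.
Import GRing.Theory.
Local Open Scope ring_scope.

Section LieDefs.
Variables (K : fieldType) (V : vectType K).

Definition is_lie_bracket (br : V -> V -> V) : Prop :=
  [/\ forall x, linear (br x),
      forall y, linear (fun x => br x y),
      forall x, br x x = 0 &
      forall x y z, br x (br y z) + br y (br z x) + br z (br x y) = 0].

Definition is_lie_ideal (br : V -> V -> V) (I : {vspace V}) : Prop :=
  forall x y, y \in I -> br x y \in I.

Definition quotient_abelian (br : V -> V -> V) (I : {vspace V}) : Prop :=
  forall x y, br x y \in I.

Definition in_center (br : V -> V -> V) (I : {vspace V}) (z : V) : Prop :=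
  z \in I /\ forall i, i \in I -> br z i = 0.

(* Z^1(g/I, Z(I)): a linear map g/I -> Z(I) is represented by its lift
   f : g -> g, i.e. a linear map vanishing on I with values in Z(I);
   f(xbar) := f x.  The action is xbar o z = [x, z]. *)
Definition cocycle1 (br : V -> V -> V) (I : {vspace V}) (f : V -> V) : Prop :=
  [/\ linear f,
      forall x, x \in I -> f x = 0,
      forall x, in_center br I (f x) &
      forall x y, f (br x y) = br x (f y) - br y (f x)].

Definition is_CPA (br : V -> V -> V) (p : V -> V -> V) : Prop :=
  [/\ forall x, linear (p x),
      forall y, linear (fun x => p x y),
      forall x y, p x y = p y x,
      forall x y z, p (br x y) z = p x (p y z) - p y (p x z) &
      forall x y z, p x (br y z) = br (p x y) z + br y (p x z)].

Definition is_lie_hom (br : V -> V -> V) (phi : V -> V) : Prop :=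
  linear phi /\ forall x y, phi (br x y) = br (phi x) (phi y).

Definition nilpotent_map (phi : V -> V) : Prop :=
  exists n : nat, forall x, iter n phi x = 0.

Definition nil_inner (br : V -> V -> V) (p : V -> V -> V) : Prop :=
  exists phi : V -> V, [/\ is_lie_hom br phi, nilpotent_map phi &
                           forall x y, p x y = br (phi x) y].

Definition associative_prod (p : V -> V -> V) : Prop :=
  forall x y z, p (p x y) z = p x (p y z).

End LieDefs.

(* Main.v *)
Require Import Defs.
From mathcomp Require Import all_boot all_order all_algebra.
From mathcomp Require Import reals complex.
Set Implicit Arguments. Unset Strict Implicit.
Import GRing.Theory.
Local Open Scope ring_scope.

Section Aux.
Variables (K : fieldType) (V : vectType K).

Lemma lin_add (g : V -> V) : linear g -> forall x y, g (x + y) = g x + g y.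
Proof. by move=> hg x y; rewrite -[x in LHS]scale1r hg scale1r. Qed.

Lemma lin0 (g : V -> V) : linear g -> g 0 = 0.
Proof.
move=> hg; have := lin_add hg 0 0; rewrite addr0 => h.
by apply: (addrI (g 0)); rewrite addr0 -h.
Qed.

Lemma lin_comp (g h : V -> V) : linear g -> linear h -> linear (fun x => g (h x)).
Proof. by move=> hg hh a u v /=; rewrite hh hg. Qed.

Lemma lin_opp (g : V -> V) : linear g -> forall x, g (- x) = - g x.
Proof.
move=> hg x; apply: (addrI (g x)); by rewrite -lin_add // !subrr lin0.
Qed.

End Aux.

Theorem proposition4p1 (R : realType) (V : vectType R[i]) (br : V -> V -> V)
    (I : {vspace V}) (f : V -> V) :
  is_lie_bracket br -> is_lie_ideal br I -> quotient_abelian br I ->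
  cocycle1 br I f ->
  let p := fun x y => br (f x) y in
  [/\ is_CPA br p, nil_inner br p & associative_prod p].
Proof.
move=> [bl br_ balt bjac] hid hab [fl fI fZ fc] p.
have b0l : forall y, br 0 y = 0 by move=> y; apply: (lin0 (br_ y)).
have b0r : forall x, br x 0 = 0 by move=> x; apply: (lin0 (bl x)).
have anti : forall x y, br x y = - br y x.
  move=> x y; have := balt (x + y).
  have e1 := lin_add (br_ x) x y; have e2 := lin_add (br_ y) x y; simpl in e1, e2.
  rewrite (lin_add (bl (x + y))) e1 e2 !balt add0r addr0.
  by rewrite addrC => /eqP; rewrite addr_eq0 => /eqP.
have fbr : forall x y, f (br x y) = 0 by move=> x y; apply: fI.
have ffx : forall x, f (f x) = 0 by move=> x; apply: fI; case: (fZ x).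
have fxfy : forall x y, br (f x) (f y) = 0.
  by move=> x y; case: (fZ x) => _ ->; case: (fZ y).
split.
- split.
  + by move=> x; apply: bl.
  + by move=> y; exact: (lin_comp (br_ y) fl).
  + move=> x y; rewrite /p; have := fc x y; rewrite fbr => /eqP.
    rewrite eq_sym subr_eq0 => /eqP h.
    by rewrite anti -h anti opprK.
  + move=> x y z; rewrite /p fbr b0l.
    have := bjac (f x) (f y) z; rewrite fxfy b0r addr0.
    rewrite [br z (f x)]anti (lin_opp (bl _)) => /eqP; rewrite subr_eq0 => /eqP.
    by move=> ->; rewrite subrr.
  + move=> x y z; rewrite /p.
    have := bjac (f x) y z.
    rewrite (anti z (f x)) (anti z (br (f x) y)) (lin_opp (bl y)).
    move/eqP; rewrite -addrA -opprD subr_eq0 => /eqP ->.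
    by rewrite addrC.
- exists f; split.
  + by split=> // x y; rewrite fbr fxfy.
  + by exists 2%N => x /=; rewrite ffx.
  + by [].
- move=> x y z; rewrite /p fbr b0l.
  by case: (fZ x) => _ h; rewrite (h (br (f y) z) (hab _ _)).
Qed.
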